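(* Consider the following algorithm producing an $n\times n$ $(0,1)$-matrix $P=[p_{ij}]$: start with $P=O$; choose some $i\in\{1,\ldots,n\}$ and set $p_{i1}=1$; then for $k=1,2,\ldots,n-1$: if $I^*_k(P)=\emptyset$, stop; otherwise choose some $i\in I^*_k(P)$ and set $p_{i,k+1}=1$. If the algorithm never stops early (i.e. $I^*_k(P)\ne\emptyset$ at every step), then the resulting matrix is a convex permutation matrix. Conversely, every convex $n\times n$ permutation matrix can be obtained as the output of this algorithm for a suitable sequence of choices.
   Context: A subpermutation matrix is a $(0,1)$-matrix with at most one $1$ in each row and column. A permutation matrix $P$ of the permutation $\pi$ of $\{1,\ldots,n\}$ (with $1$'s in positions $(i,\pi_i)$) is convex if $\pi_2-\pi_1\le\pi_3-\pi_2\le\cdots\le\pi_n-\pi_{n-1}$. For a subpermutation matrix $P$, $I_k(P)$ is the set of rows containing a $1$ in one of the first $k$ columns. For $k\le n$, an $n\times n$ subpermutation matrix $P$ is $k$-convex if (i) each of its first $k$ columns contains exactly one $1$, (ii) $I_k(P)$ is an interval $\{r,r+1,\ldots,s\}$ of consecutive integers, and (iii) $\pi_{i+1}-\pi_i\le\pi_{i+2}-\pi_{i+1}$ for $i=r,\ldots,s-2$, where $\pi_i$ denotes the column of the unique $1$ in row $i$. For a $k$-convex subpermutation matrix $P$ whose columns $k+1,\ldots,n$ are zero, with $I_k(P)=\{r,\ldots,s\}$, the set $I^*_k(P)\subseteq\{r-1,s+1\}$ is defined by: $r-1\in I^*_k(P)$ iff $r>1$ and the matrix obtained from $P$ by putting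 a $1$ in position $(r-1,k+1)$ is $(k+1)$-convex; $s+1\in I^*_k(P)$ iff $s<n$ and the matrix obtained from $P$ by putting a $1$ in position $(s+1,k+1)$ is $(k+1)$-convex. *)

(* Defs.v *)
(* Matrices are n x n boolean matrices 'M[bool]_n, indices
   are 0-based ('I_n); row/column i here is row/column i+1 of the paper. *)
From mathcomp Require Import all_boot all_order all_fingroup all_algebra.
Set Implicit Arguments. Unset Strict Implicit. Unset Printing Implicit Defensive.

Section Defs.
Variable n : nat.
Implicit Types (P : 'M[bool]_n).

Definition subperm P : Prop :=
  (forall (i : 'I_n) (j j' : 'I_n), P i j -> P i j' -> j = j') /\
  (forall (j : 'I_n) (i i' : 'I_n), P i j -> P i' j -> i = i').

Definition Iset (k : nat) P : {set 'I_n} :=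
  [set i | [exists j : 'I_n, (j < k) && P i j]].

(* Condition (iii) is stated via the columns j0, j1, j2 of the 1's in rows
   i, i+1, i+2 (unique, since P is a subpermutation matrix). *)
Definition kconvex (k : nat) P : Prop :=
  subperm P /\ k <= n /\
  (forall j : 'I_n, j < k -> #|[set i | P i j]| = 1) /\
  exists r s : nat, r <= s /\
    (forall i : 'I_n, (i \in Iset k P) = (r <= i <= s)) /\
    (forall (i0 i1 i2 j0 j1 j2 : 'I_n),
        r <= i0 -> i1 = i0.+1 :> nat -> i2 = i0.+2 :> nat -> i2 <= s ->
        P i0 j0 -> P i1 j1 -> P i2 j2 ->
        (j1%:Z - j0%:Z <= j2%:Z - j1%:Z)%R).

Definition setone P (i j : 'I_n) : 'M[bool]_n :=
  \matrix_(a, b) (P a b || ((a == i) && (b == j))).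

(* membership i \in I*_k(P); [k] is here the 0-based index of column k+1,
   i.e. P is k-convex with columns k+1..n (0-based k..n-1) zero, and
   I_k(P) = {r..s}; i = r-1 (with r > 1) or i = s+1 (with s < n) and
   putting a 1 at (i, k+1) yields a (k+1)-convex matrix. *)
Definition Istar (k : 'I_n) P (i : 'I_n) : Prop :=
  kconvex k P /\
  (forall (a b : 'I_n), k <= b -> P a b = false) /\
  exists r s : nat, r <= s /\
    (forall a : 'I_n, (a \in Iset k P) = (r <= a <= s)) /\
    ((0 < r /\ i = r.-1 :> nat) \/ (s < n.-1 /\ i = s.+1 :> nat)) /\
    kconvex k.+1 (setone P i k).

(* the matrix produced after the first k steps of the algorithm when the
   1 of column b (0-based) is placed in row c b *)
Definition algmx (c : 'I_n -> 'I_n) (k : nat) : 'M[bool]_n :=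
  \matrix_(a, b) ((b < k) && (c b == a)).

(* a run of the algorithm that never stops early: every choice c k
   (k = 1..n-1, 0-based column k) lies in I*_k of the current matrix *)
Definition alg_run (c : 'I_n -> 'I_n) : Prop :=
  forall k : 'I_n, 0 < k -> Istar k (algmx c k) (c k).

Definition convex_perm_mx P : Prop :=
  exists s : 'S_n, P = (\matrix_(i, j) (s i == j))%R /\
    forall i0 i1 i2 : 'I_n, i1 = i0.+1 :> nat -> i2 = i0.+2 :> nat ->
      ((s i1)%:Z - (s i0)%:Z <= (s i2)%:Z - (s i1)%:Z)%R.
End Defs.

(* Main.v *)
Require Import Defs.
From mathcomp Require Import all_boot all_order all_fingroup all_algebra.
From mathcomp Require Import zify.
Set Implicit Arguments. Unset Strict Implicit. Unset Printing Implicit Defensive.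

Definition convh (n : nat) (f : nat -> int) :=
  forall m, m.+2 < n -> (f m.+1 - f m <= f m.+2 - f m.+1)%R.

Lemma convA m p (n : nat) (f : nat -> int) (Hc : convh n f) : m <= p -> p.+1 < n -> (f m.+1 - f m <= f p.+1 - f p)%R.
Proof.
elim: p => [|p IH] Hmp Hp; first by have -> : m = 0 by lia.
case: (ltngtP m p.+1) => H; last by rewrite H.
- have := Hc p Hp; have := IH H (ltnW Hp); lia.
- lia.
Qed.

Lemma convB m a (n : nat) (f : nat -> int) (Hc : convh n f) : (0 < f m.+1 - f m)%R -> m <= a -> a.+1 < n -> (f a < f a.+1)%R.
Proof. move=> H1 H2 H3; have := convA Hc H2 H3; lia. Qed.

Lemma convB2 m b l (n : nat) (f : nat -> int) (Hc : convh n f) : (0 < f m.+1 - f m)%R -> m <= b -> b < l -> l < n -> (f b < f l)%R.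
Proof.
move=> H1 H2; elim: l => [|l IH] //= Hbl Hl.
have := convB Hc H1 (m:=m) (a:=l) ltac:(lia) Hl.
case: (ltngtP b l) => H; first by have := IH H (ltnW Hl); lia.
- lia.
- by rewrite H.
Qed.

Lemma convC i j (n : nat) (f : nat -> int) (Hc : convh n f) : i < j -> (f i < f j)%R -> exists m, i <= m < j /\ (f m < f m.+1)%R.
Proof.
elim: j => [|j IH] //= Hij Hf.
case: (ltngtP i j) => H.
- case: (boolP (f i < f j)%R) => H2.
  + by case: (IH H H2) => m [Hm1 Hm2]; exists m; split => //; lia.
  + by rewrite -Order.TotalTheory.leNgt in H2; exists j; split; [lia | lia].
- lia.
- by subst; exists j; split; [lia | ].
Qed.

Lemma conv_sub i j l (K : int) (n : nat) (f : nat -> int) (Hc : convh n f) : i <= j <= l -> l < n ->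
  (f i < K)%R -> (f l < K)%R -> (f j < K)%R.
Proof.
move=> /andP [H1 H2] H3 Hi Hl.
case: (ltngtP i j) => E1; last by rewrite -E1.
- case: (ltngtP j l) => E2; last by rewrite E2.
  + rewrite Order.TotalTheory.ltNge; apply/negP => HK.
    have [m [Hm1 Hm2]] := convC Hc E1 ltac:(lia).
    have H0 : (0 < f m.+1 - f m)%R by lia.
    have Hmj : m <= j by lia.
    have := convB2 Hc H0 Hmj E2 H3; lia.
  + lia.
- lia.
Qed.

Definition cvx (n : nat) (A : {set 'I_n}) :=
  forall i j l : 'I_n, i <= j <= l -> i \in A -> l \in A -> j \in A.

Lemma interval (n : nat) (A : {set 'I_n}) (x0 : 'I_n) : x0 \in A -> cvx A ->
  exists r s : 'I_n, [/\ r \in A, s \in A & forall i : 'I_n, (i \in A) = (r <= i <= s)].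
Proof.
move=> Hx0 Hc.
case: (arg_minnP (fun i : 'I_n => val i) Hx0) => r Hr Hrmin.
case: (arg_maxnP (fun i : 'I_n => val i) Hx0) => s Hs Hsmax.
exists r, s; split => // i; apply/idP/idP.
- by move=> Hi; rewrite Hrmin //=; exact: (Hsmax i Hi).
- by move=> Hi; apply: (Hc r i s).
Qed.

Lemma adj (n : nat) (A : {set 'I_n}) (x r s : 'I_n) : x \notin A -> r \in A -> s \in A ->
  (forall i : 'I_n, (i \in A) = (r <= i <= s)) -> cvx (x |: A) ->
  (0 < r /\ x = r.-1 :> nat) \/ (s < n.-1 /\ x = s.+1 :> nat).
Proof.
move=> Hx Hr Hs HA Hc.
have Hxn := ltn_ord x; have Hrn := ltn_ord r; have Hsn := ltn_ord s.
case: (ltnP x r) => Hxr.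
  left; split; first by lia.
  case: (ltnP x.+1 r) => H; last by lia.
  have Hy : x.+1 < n by lia.
  have : Ordinal Hy \in x |: A.
    by apply: (Hc x _ r); rewrite ?inE ?eqxx ?Hr ?orbT //=; apply/andP; split; lia.
  rewrite !inE; case/orP; first by move/eqP/(congr1 val) => /=; lia.
  by rewrite HA /=; lia.
case: (ltnP s x) => Hsx; last by move: Hx; rewrite HA Hxr Hsx.
right; split; first by lia.
case: (ltnP s.+1 x) => H; last by lia.
have Hy : s.+1 < n by lia.
have : Ordinal Hy \in x |: A.
  by apply: (Hc s _ x); rewrite ?inE ?eqxx ?Hs ?orbT //=; apply/andP; split; lia.
rewrite !inE; case/orP; first by move/eqP/(congr1 val) => /=; lia.
by rewrite HA /=; lia.
Qed.

Lemma setone_alg (n : nat) (c : 'I_n -> 'I_n) (k : 'I_n) :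
  setone (algmx c k) (c k) k = algmx c k.+1.
Proof.
apply/matrixP => a b; rewrite !mxE.
case E: (b == k).
  by move/eqP: E => ->; rewrite ltnn ltnSn /= andbT eq_sym.
have Hb : (b : nat) != k by move/negbT: E.
by rewrite andbF orbF ltnS ltn_neqAle Hb.
Qed.

Definition fofs (n : nat) (s : 'S_n) (m : nat) : int :=
  if (insub m : option 'I_n) is Some i then Posz (s i) else Posz 0.

Lemma fofsE (n : nat) (s : 'S_n) (i : 'I_n) : fofs s i = Posz (s i).
Proof. by rewrite /fofs valK. Qed.

Definition scvx (n : nat) (s : 'S_n) := forall i0 i1 i2 : 'I_n,
  i1 = i0.+1 :> nat -> i2 = i0.+2 :> nat ->
  ((s i1)%:Z - (s i0)%:Z <= (s i2)%:Z - (s i1)%:Z)%R.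

Lemma fofs_conv (n : nat) (s : 'S_n) : scvx s -> convh n (fofs s).
Proof.
move=> Hs m Hm.
have H0 : m < n by lia.
have H1 : m.+1 < n by lia.
have := Hs (Ordinal H0) (Ordinal H1) (Ordinal Hm) erefl erefl.
by rewrite -!(fofsE s).
Qed.

Lemma Aset_cvx (n : nat) (s : 'S_n) (k : nat) (Hs : scvx s) : cvx [set i : 'I_n | s i < k].
Proof.
move=> i j l Hijl; rewrite !inE => Hi Hl.
have := @conv_sub i j l (Posz k) n (fofs s) (fofs_conv Hs) Hijl (ltn_ord l).
rewrite !fofsE; move=> H; have := H ltac:(lia) ltac:(lia); lia.
Qed.

Lemma Iset_alg (n : nat) (s : 'S_n) (k : nat) :
  Iset k (algmx (fun j => (s^-1)%g j) k) = [set i : 'I_n | s i < k].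
Proof.
apply/setP => i; rewrite !inE; apply/existsP/idP.
- case=> j; rewrite mxE => /and3P [Hj _ /eqP <-]; by rewrite permKV.
- move=> H; exists (s i); by rewrite mxE H /= permK eqxx.
Qed.

Lemma KC (n : nat) (s : 'S_n) (k : nat) (r t : 'I_n) : scvx s -> k <= n -> r <= t ->
  (forall i : 'I_n, (i \in [set i : 'I_n | s i < k]) = (r <= i <= t)) ->
  kconvex k (algmx (fun j => (s^-1)%g j) k).
Proof.
move=> Hs Hk Hrt HA.
split; [split|split; [done|split]].
- move=> i j j'; rewrite !mxE => /andP [_ /eqP H1] /andP [_ /eqP H2].
  by apply: (perm_inj (s := (s^-1)%g)); rewrite H1 H2.
- move=> j i i'; rewrite !mxE => /andP [_ /eqP H1] /andP [_ /eqP H2].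
  by rewrite -H1 -H2.
- move=> j Hj.
  have -> : [set i | algmx (fun j => (s^-1)%g j) k i j] = [set (s^-1)%g j].
    by apply/setP => i; rewrite !inE mxE Hj /= eq_sym.
  by rewrite cards1.
exists r, t; split; first done.
split; first by move=> i; rewrite Iset_alg HA.
move=> i0 i1 i2 j0 j1 j2 _ E1 E2 _.
rewrite !mxE => /andP [_ /eqP H0] /andP [_ /eqP H1] /andP [_ /eqP H2].
have <- : s i0 = j0 by rewrite -H0 permKV.
have <- : s i1 = j1 by rewrite -H1 permKV.
have <- : s i2 = j2 by rewrite -H2 permKV.
exact: Hs.
Qed.

Lemma part2 (n : nat) (P : 'M[bool]_n) : convex_perm_mx P ->
  exists c : 'I_n -> 'I_n, alg_run c /\ algmx c n = P.
Proof.
case=> s [-> Hs].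
exists (fun j => (s^-1)%g j); split; last first.
  apply/matrixP => a b; rewrite !mxE ltn_ord /=.
  by apply/eqP/eqP => H; [rewrite -H permKV | rewrite -H permK].
move=> k Hk0.
have Hn0 : 0 < n by have := ltn_ord k; lia.
set c := (fun j => (s^-1)%g j).
have Hx0 : forall k' : nat, 0 < k' -> (s^-1)%g (Ordinal Hn0) \in [set i : 'I_n | s i < k'].
  by move=> k' Hk'; rewrite inE permKV.
have [r [t [Hr Ht HA]]] := interval (Hx0 k Hk0) (Aset_cvx (k:=k) Hs).
have Hrt : r <= t by move: Hr; rewrite HA => /andP [].
split.
  exact: (KC Hs (ltnW (ltn_ord k)) Hrt HA).
split.
  by move=> a b Hb; rewrite mxE ltnNge Hb.
exists r, t; split; first done.
split; first by move=> i; rewrite Iset_alg HA.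
split; last first.
  rewrite setone_alg.
  have [r' [t' [Hr' Ht' HA']]] := interval (Hx0 k.+1 isT) (Aset_cvx (k:=k.+1) Hs).
  have Hrt' : r' <= t' by move: Hr'; rewrite HA' => /andP [].
  exact: (KC Hs (ltn_ord k) Hrt' HA').
apply: (adj (A := [set i : 'I_n | s i < k])) => //.
- by rewrite inE /c permKV ltnn.
- have -> : c k |: [set i : 'I_n | s i < k] = [set i : 'I_n | s i < k.+1].
    apply/setP => i; rewrite !inE ltnS [s i <= k]leq_eqVlt; congr orb.
    by rewrite /c; apply/eqP/eqP => [->|H]; [rewrite permKV | rewrite -(val_inj H) permK].
  exact: Aset_cvx.
Qed.

Lemma part1_gen (n : nat) (c : 'I_n -> 'I_n) (cinj : injective c) :
  scvx ((perm cinj)^-1)%g -> convex_perm_mx (algmx c n).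
Proof.
move=> Hs; exists ((perm cinj)^-1)%g; split => //.
apply/matrixP => a b; rewrite !mxE ltn_ord /= -(permE cinj).
by apply/eqP/eqP => H; [rewrite -H permK | rewrite -H permKV].
Qed.

Lemma part1 (n : nat) (c : 'I_n -> 'I_n) : alg_run c -> convex_perm_mx (algmx c n).
Proof.
case: n c => [|[|n]] c Hrun.
- have cinj : injective c by case.
  apply: (part1_gen (cinj := cinj)); case => //.
- have cinj : injective c by move=> x y _; rewrite (ord1 x) (ord1 y).
  apply: (part1_gen (cinj := cinj)) => i0 i1 i2 _ E2; have := ltn_ord i2; lia.
have := Hrun ord_max isT => [[_ [_ [r [t [_ [_ [_ Hk]]]]]]]].
rewrite setone_alg /= in Hk.
case: Hk => [[Hsub1 _] [_ [_ [r0 [s0 [Hrs [HI Hcv]]]]]]].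
have cinj : injective c.
  move=> j j' E; apply: (Hsub1 (c j)); rewrite mxE ltn_ord /= ?E eqxx //.
apply: (part1_gen (cinj := cinj)) => i0 i1 i2 E1 E2.
set s := ((perm cinj)^-1)%g.
have HP : forall i, algmx c n.+2 i (s i).
  by move=> i; rewrite mxE ltn_ord /= /s -{1}(permE cinj) permKV.
have Hin : forall i : 'I_n.+2, r0 <= i <= s0.
  move=> i; rewrite -HI inE; apply/existsP; exists (s i); by rewrite ltn_ord HP.
apply: (Hcv i0 i1 i2) => //.
- by case/andP: (Hin i0).
- by case/andP: (Hin i2).
Qed.

Theorem lemma4p3 (n : nat) :
  (forall c : 'I_n -> 'I_n, alg_run c -> convex_perm_mx (algmx c n)) /\
  (forall P : 'M[bool]_n, convex_perm_mx P ->
     exists c : 'I_n -> 'I_n, alg_run c /\ algmx c n = P).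
Proof.
split; [exact: part1 | exact: part2].
Qed.
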